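(* Let $e,e',\hat e$ be events of a branching process of a parallel composition $\mathbf{A}=\mathcal{A}_1\parallel\cdots\parallel\mathcal{A}_n$ of labelled transition systems. If $e'\ll e$ and $\hat e$ is concurrent with both $e'$ and $e$, then $([e]\setminus[e'])\cap[\hat e]=\emptyset$.
   Context: A labelled transition system is $\mathcal{A}=(\Sigma,S,T,\lambda,s^0)$ with $T\subseteq S\times S$, $\lambda:T\to\Sigma$. For $\mathcal{A}_j=(\Sigma_j,S_j,T_j,\lambda_j,s^0_j)$, the parallel composition has global states in $S_1\times\cdots\times S_n$, initial state $(s^0_1,\dots,s^0_n)$, and global transitions $\mathbf{t}=(t_1,\dots,t_n)\ne(\star,\dots,\star)$ with label $a$, where $t_j$ is an $a$-transition of $\mathcal{A}_j$ if $a\in\Sigma_j$ and $t_j=\star$ otherwise; ${}^\bullet\mathbf{t}$ / $\mathbf{t}^\bullet$ are the source / target states of the $t_j\ne\star$. Branching processes of $\mathbf{A}$ are Petri nets with conditions labelled by local states and events labelled by global transitions, defined inductively: the net with conditions $b^0_1,\dots,b^0_n$ labelled $s^0_1,\dots,s^0_n$ and no events is one; if a reachable marking contains a set $M$ of conditions labelled exactly by ${}^\bullet\mathbf{t}$ and no event labelled $\mathbf{t}$ has input set $M$, adding an event labelled $\mathbf{t}$ with inputs $M$ and fresh outputs labelled by the states of $\mathbf{t}^\bullet$ gives a branching process; general branching processes are unions of such. For nodes $x,y$: $x<y$ if there is a nonempty directed arc path from $x$ to $y$; $x$ and $y$ are in conflict if there is a condition $z$ different from both from which both are reachable via paths leaving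 $z$ by different arcs; $x,y$ are concurrent if neither $x\le y$, nor $y\le x$, nor in conflict. $[e]=\{e':e'\le e\}$; $M(e)$ is the marking reached by firing exactly the events of $[e]$ from the initial marking. $e'\ll e$ (strong cause) means $e'<e$ and $b'<b$ for all $b\in M(e)\setminus M(e')$, $b'\in M(e')\setminus M(e)$. *)

(* Defs.v *)
From mathcomp Require Import all_boot.
From Stdlib Require Import Relations List.

Set Implicit Arguments.
Unset Strict Implicit.
Unset Printing Implicit Defensive.

(* A labelled transition system over a common action universe [Sigma]:
   alphabet Sigma_j (as a predicate), states S, transitions T \subseteq S x S,
   labelling lambda : T -> Sigma_j (given as a function on pairs that is only
   used on T), initial state s0. *)
Record lts (Sigma : Type) := LTS {
  alph : Sigma -> Prop;
  state : Type;
  trans : state -> state -> Prop;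
  lab : state -> state -> Sigma;
  lab_alph : forall s s', trans s s' -> alph (lab s s');
  init : state }.

Section BranchingProcesses.
Variables (Sigma : Type) (n : nat) (A : 'I_n -> lts Sigma).

(* Candidate global transitions: a label a and, per component, either a local
   transition (Some (s,s')) or the idle marker star (None). *)
Record gtrans := GTrans {
  glab : Sigma;
  gcomp : forall j : 'I_n, option (state (A j) * state (A j)) }.

Definition gvalid (t : gtrans) : Prop :=
  (exists j, gcomp t j <> None) /\
  forall j,
    (alph (A j) (glab t) ->
       exists p, gcomp t j = Some p /\ trans p.1 p.2 /\ @lab _ (A j) p.1 p.2 = glab t)
    /\ (~ alph (A j) (glab t) -> gcomp t j = None).

(* Canonically named nodes of branching processes: an initial condition of
   component j, the output condition of event e in component j, and the event
   labelled t with input conditions pre (listed in increasing component order). *)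
Inductive cond : Type :=
  | CInit (j : 'I_n)
  | COut (e : event) (j : 'I_n)
with event : Type :=
  | Ev (t : gtrans) (pre : list cond).

Definition etr (e : event) : gtrans := let: Ev t _ := e in t.
Definition epre (e : event) : list cond := let: Ev _ p := e in p.
Definition comp (c : cond) : 'I_n := match c with CInit j => j | COut _ j => j end.

(* Label of a condition: a local state, tagged by its component
   (local state spaces of distinct components are regarded as disjoint). *)
Definition clab (c : cond) : option {j : 'I_n & state (A j)} :=
  match c with
  | CInit j => Some (existT _ j (init (A j)))
  | COut e j => match gcomp (etr e) j with
                | Some p => Some (existT _ j p.2)
                | None => None
                end
  end.

Definition pre_ok (t : gtrans) (pre : list cond) : Prop :=
  map comp pre = [seq j <- enum 'I_n | isSome (gcomp t j)] /\
  forall c, List.In c pre ->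
    exists p, gcomp t (comp c) = Some p /\ clab c = Some (existT _ (comp c) p.1).

Definition marking := cond -> Prop.
Definition initM : marking := fun c => exists j, c = CInit j.

Definition fire (m : marking) (e : event) (m' : marking) : Prop :=
  (forall c, List.In c (epre e) -> m c) /\
  forall c, m' c <->
    ((m c /\ ~ List.In c (epre e)) \/
     (exists j, c = COut e j /\ gcomp (etr e) j <> None)).

Inductive reach (L : list event) : marking -> Prop :=
  | reach0 m : (forall c, m c <-> initM c) -> reach L m
  | reachS m e m' : reach L m -> List.In e L -> fire m e m' -> reach L m'.

Inductive fbp : list event -> Prop :=
  | fbp0 : fbp nil
  | fbpS L t pre m :
      fbp L -> gvalid t -> reach L m ->
      (forall c, List.In c pre -> m c) -> pre_ok t pre ->
      ~ List.In (Ev t pre) L ->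
      fbp (Ev t pre :: L).

Definition is_bp (P : event -> Prop) : Prop :=
  exists (I : Type) (F : I -> list event),
    (forall i, fbp (F i)) /\ forall e, P e <-> exists i, List.In e (F i).

Inductive node : Type := NC (c : cond) | NE (e : event).

Definition arc (P : event -> Prop) (x y : node) : Prop :=
  match x, y with
  | NC c, NE e => P e /\ List.In c (epre e)
  | NE e, NC c => P e /\ exists j, c = COut e j /\ gcomp (etr e) j <> None
  | _, _ => False
  end.

Definition lt_node P := clos_trans node (arc P).
Definition le_node P := clos_refl_trans node (arc P).

Definition conflict P (x y : node) : Prop :=
  exists (z : cond) (e1 e2 : event),
    NC z <> x /\ NC z <> y /\
    arc P (NC z) (NE e1) /\ arc P (NC z) (NE e2) /\ e1 <> e2 /\
    le_node P (NE e1) x /\ le_node P (NE e2) y.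

Definition concurrent P (x y : node) : Prop :=
  ~ le_node P x y /\ ~ le_node P y x /\ ~ conflict P x y.

Fixpoint fireseq (m : marking) (s : list event) (m'' : marking) : Prop :=
  match s with
  | nil => forall c, m c <-> m'' c
  | f :: s' => exists m', fire m f m' /\ fireseq m' s' m''
  end.

Definition Mark P (e : event) (m : marking) : Prop :=
  exists s : list event,
    List.NoDup s /\
    (forall f, List.In f s <-> (P f /\ le_node P (NE f) (NE e))) /\
    fireseq initM s m.

Definition strong_cause P (e' e : event) : Prop :=
  lt_node P (NE e') (NE e) /\
  exists m m', Mark P e m /\ Mark P e' m' /\
    forall b b', m b -> ~ m' b -> m' b' -> ~ m b' -> lt_node P (NC b') (NC b).

End BranchingProcesses.

(* Main.v *)
Require Import Defs.
From mathcomp Require Import all_boot.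
From Stdlib Require Import Relations List Lia Classical.
From mathcomp Require Import zify.

Set Implicit Arguments.
Unset Strict Implicit.
Section Aux.
Variables (Sigma : Type) (n : nat) (A : 'I_n -> lts Sigma).

Fixpoint esize (e : event A) : nat :=
  match e with
  | Ev _ pre => S ((fix lsz (l : list (cond A)) : nat :=
      match l with
      | nil => 0
      | c :: l' => (match c with CInit _ => 0 | COut e' _ => S (esize e') end) + lsz l'
      end) pre)
  end.

Definition csize (c : cond A) : nat :=
  match c with CInit _ => 0 | COut e _ => S (esize e) end.

Lemma esize_lt t pre c : List.In c pre -> (csize c < esize (Ev t pre))%coq_nat.
Proof.
  induction pre as [|a l IH]; simpl; [tauto|].
  intros [->|H].
  - destruct c; simpl; lia.
  - specialize (IH H). simpl in IH. lia.
Qed.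

Definition nsize (x : node A) : nat :=
  match x with NC c => csize c | NE e => esize e end.

Lemma arc_lt (P : event A -> Prop) (x y : node A) : Defs.arc P x y -> (nsize x < nsize y)%coq_nat.
Proof.
  destruct x as [c|e]; destruct y as [c'|e']; simpl; try tauto.
  - intros [_ H]. destruct e'. apply esize_lt; exact H.
  - intros [_ [j [-> _]]]. simpl. lia.
Qed.

Lemma lt_size (P : event A -> Prop) (x y : node A) : lt_node P x y -> (nsize x < nsize y)%coq_nat.
Proof.
  induction 1 as [x y H|x y z _ IH1 _ IH2].
  - exact (arc_lt H).
  - lia.
Qed.

Lemma lt_irr (P : event A -> Prop) (x : node A) : ~ lt_node P x x.
Proof. intro H. apply lt_size in H. lia. Qed.

Lemma F1 (m0 m : marking A) s c : fireseq m0 s m -> m c ->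
  m0 c \/ exists h j, c = COut h j /\ List.In h s.
Proof.
  revert m0. induction s as [|f s IH]; simpl; intros m0 H Hc.
  - left. apply H. exact Hc.
  - destruct H as [m1 [[_ Hf] Hs]].
    destruct (IH m1 Hs Hc) as [H1|[h [j [-> Hh]]]].
    + apply Hf in H1. destruct H1 as [[H1 _]|[j [-> _]]].
      * left; exact H1.
      * right. exists f, j. auto.
    + right. exists h, j. auto.
Qed.

Lemma keep (m0 m : marking A) s c : fireseq m0 s m -> m0 c ->
  (forall x, List.In x s -> ~ List.In c (epre x)) -> m c.
Proof.
  revert m0. induction s as [|f s IH]; simpl; intros m0 H Hc Hx.
  - apply H. exact Hc.
  - destruct H as [m1 [[_ Hf] Hs]].
    apply (IH m1 Hs); [|intros; apply Hx; auto].
    apply Hf. left. split; [exact Hc|apply Hx; auto].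
Qed.

Lemma F2 (m0 m : marking A) s h j : fireseq m0 s m -> List.In h s -> gcomp (etr h) j <> None ->
  (forall x, List.In x s -> ~ List.In (COut h j) (epre x)) -> m (COut h j).
Proof.
  revert m0. induction s as [|f s IH]; simpl; intros m0 H Hh Hg Hx; [tauto|].
  destruct H as [m1 [[_ Hf] Hs]].
  destruct Hh as [<-|Hh].
  - apply (keep Hs); [|intros; apply Hx; auto].
    apply Hf. right. exists j. auto.
  - apply (IH m1 Hs Hh Hg). intros; apply Hx; auto.
Qed.

Lemma avoid (m0 m : marking A) s h j : fireseq m0 s m -> ~ m0 (COut h j) -> ~ List.In h s ->
  ~ m (COut h j).
Proof.
  revert m0. induction s as [|f s IH]; simpl; intros m0 H H0 Hh.
  - intro Hm. apply H0. apply H. exact Hm.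
  - destruct H as [m1 [[_ Hf] Hs]].
    apply (IH m1 Hs); [|tauto].
    intro Hm. apply Hf in Hm. destruct Hm as [[Hm _]|[j' [E _]]].
    + exact (H0 Hm).
    + injection E as E1 _. apply Hh. left. symmetry. exact E1.
Qed.

Lemma fireseq_app (m0 m : marking A) s1 s2 : fireseq m0 (s1 ++ s2) m ->
  exists mid, fireseq m0 s1 mid /\ fireseq mid s2 m.
Proof.
  revert m0. induction s1 as [|f s1 IH]; simpl; intros m0 H.
  - exists m0. split; [tauto|exact H].
  - destruct H as [m1 [Hf Hs]]. destruct (IH m1 Hs) as [mid [H1 H2]].
    exists mid. split; [exists m1; auto|exact H2].
Qed.

Lemma nodup_app_disj (T : Type) (s1 s2 : list T) h :
  NoDup (s1 ++ s2) -> List.In h s1 -> ~ List.In h s2.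
Proof.
  induction s1 as [|a s1 IH]; simpl; [tauto|].
  intros Hn [<-|Hh].
  - apply NoDup_cons_iff in Hn. intro H. apply (proj1 Hn). apply in_or_app; auto.
  - apply NoDup_cons_iff in Hn. apply IH; tauto.
Qed.

Lemma F4 (m : marking A) s x h j : NoDup s -> fireseq (initM (A:=A)) s m -> List.In x s ->
  List.In (COut h j) (epre x) -> ~ m (COut h j).
Proof.
  intros Hn Hs Hx Hc.
  destruct (in_split x s Hx) as [s1 [s2 ->]].
  destruct (fireseq_app Hs) as [mid [H1 H2]].
  simpl in H2. destruct H2 as [m1 [[Hpre Hf] H3]].
  have Hmid := Hpre _ Hc.
  destruct (F1 H1 Hmid) as [[j0 E]|[h' [j' [E Hh]]]]; [discriminate|].
  injection E as <- <-.
  have Hd := nodup_app_disj Hn Hh.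
  apply (avoid H3).
  - intro Hm. apply Hf in Hm. destruct Hm as [[_ Hm]|[j'' [E _]]].
    + exact (Hm Hc).
    + injection E as E _. apply Hd. left. symmetry; exact E.
  - intro H. apply Hd. right. exact H.
Qed.

Lemma exit_arc (P : event A -> Prop) (inn : node A -> Prop) x y : le_node P x y -> inn x -> ~ inn y ->
  exists u v, le_node P x u /\ Defs.arc P u v /\ inn u /\ ~ inn v /\ le_node P v y.
Proof.
  intro H. apply clos_rt_rt1n in H.
  induction H as [a|a b c Ha Hr IH]; intros Hx Hy; [tauto|].
  destruct (classic (inn b)) as [H1|H1].
  - destruct (IH H1 Hy) as [u [v [Hxu Hr']]]. exists u, v. split; [|exact Hr'].
    eapply rt_trans; [apply rt_step; exact Ha|exact Hxu].
  - exists a, b. repeat split; auto. apply rt_refl.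
    apply clos_rt1n_rt. exact Hr.
Qed.

Lemma le_cond_event (P : event A -> Prop) c e : le_node P (NC c) (NE e) ->
  exists x, Defs.arc P (NC c) (NE x) /\ le_node P (NE x) (NE e).
Proof.
  intro H. apply clos_rt_rt1n in H.
  remember (NC c) as x0 eqn:E0. remember (NE e) as y0 eqn:E1.
  destruct H as [|y z0 Ha Hr]; [subst; discriminate|]. subst.
  destruct y as [c'|x]; [simpl in Ha; contradiction|].
  exists x. split; [exact Ha|apply clos_rt1n_rt; exact Hr].
Qed.

Lemma le_of_lt (P : event A -> Prop) x y : lt_node P x y -> le_node P x y.
Proof.
  induction 1 as [a b H|a b c _ IH1 _ IH2]; [apply rt_step; exact H|].
  eapply rt_trans; eassumption.
Qed.

Lemma lt_le (P : event A -> Prop) x y z : lt_node P x y -> le_node P y z -> lt_node P x z.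
Proof.
  intros H1 H2. apply clos_rt_rt1n in H2. revert x H1.
  induction H2 as [a|a b c Ha Hr IH]; intros x H1; [exact H1|].
  apply IH. eapply t_trans; [exact H1|apply t_step; exact Ha].
Qed.

End Aux.

Theorem lemma2 (Sigma : Type) (n : nat) (A : 'I_n -> lts Sigma)
    (P : event A -> Prop) (e e' eh : event A) :
  is_bp P -> P e -> P e' -> P eh ->
  strong_cause P e' e ->
  concurrent P (NE eh) (NE e') -> concurrent P (NE eh) (NE e) ->
  forall f : event A, P f ->
    le_node P (NE f) (NE e) -> ~ le_node P (NE f) (NE e') ->
    ~ le_node P (NE f) (NE eh).
Proof.
  intros _ Pe Pe' Peh [Hlt [m [m' [[s [Hns [Hs Hfs]]] [[s' [Hns' [Hs' Hfs']]] Hsc]]]]]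
    [_ [Hc1 _]] [Hc2 [Hc3 Hc4]] f Pf Hfe Hfe' Hfeh.
  apply clos_trans_t1n in Hlt.
  assert (Hd : exists d, Defs.arc P (NE e') (NC d) /\ le_node P (NC d) (NE e)).
  { remember (NE e') as a0 eqn:E0. remember (NE e) as b0 eqn:E1.
    destruct Hlt as [b Ha|y b Ha Hr]; subst.
    - simpl in Ha; contradiction.
    - destruct y as [d|x]; [|simpl in Ha; contradiction].
      exists d. split; [exact Ha|].
      apply le_of_lt. apply clos_trans_t1n_iff. exact Hr. }
  destruct Hd as [d [Hd1 Hd2]].
  have Hd1' := Hd1. destruct Hd1' as [_ [j [-> Hgj]]].
  destruct (le_cond_event Hd2) as [x [Hx1 Hx2]].
  have Hdm' : m' (COut e' j).
  { apply (F2 Hfs'); [apply Hs'; split; [exact Pe'|apply rt_refl]|exact Hgj|].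
    intros y Hy Hin. apply Hs' in Hy. destruct Hy as [Py Hy].
    apply (@lt_irr _ _ _ P (NE e')).
    apply (lt_le (y := NE y)); [|exact Hy].
    eapply t_trans; [apply t_step; exact Hd1|apply t_step; exact (conj Py Hin)]. }
  have Hdm : ~ m (COut e' j).
  { apply (F4 Hns Hfs (x := x)); [apply Hs; split; [exact (proj1 Hx1)|exact Hx2]|exact (proj2 Hx1)]. }
  destruct (exit_arc (inn := fun z => le_node P z (NE e)) Hfeh Hfe Hc2)
    as [u [v [Hfu [Huv [Hu [Hv Hveh]]]]]].
  destruct u as [c|h]; destruct v as [c'|h']; simpl in Huv; try tauto.
  - destruct (le_cond_event Hu) as [x2 [Hx21 Hx22]]. apply Hc4.
    exists c, h', x2. split; [discriminate|]. split; [discriminate|].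
    split; [exact Huv|]. split; [exact Hx21|]. split.
    + intro E; subst. apply Hv; exact Hx22.
    + split; assumption.
  - destruct Huv as [Ph [j' [-> Hg]]].
    have Hbm : m (COut h j').
    { apply (F2 Hfs); [apply Hs; split; assumption|exact Hg|].
      intros y Hy Hin. apply Hs in Hy. destruct Hy as [Py Hy]. apply Hv.
      apply (rt_trans _ _ _ (NE y)); [apply rt_step; exact (conj Py Hin)|exact Hy]. }
    have Hbm' : ~ m' (COut h j').
    { intro H. destruct (F1 Hfs' H) as [[j0 E]|[h2 [j2 [E Hh2]]]]; [discriminate|].
      injection E as <- _. apply Hs' in Hh2. apply Hfe'.
      eapply rt_trans; [exact Hfu|exact (proj2 Hh2)]. }
    have Hlt2 := Hsc _ _ Hbm Hbm' Hdm' Hdm.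
    apply Hc1. eapply rt_trans; [apply rt_step; exact Hd1|].
    eapply rt_trans; [apply le_of_lt; exact Hlt2|exact Hveh].
Qed.
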